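(* Let $(p,q),(r,s)\in\mathbb{Z}^2$ be such that the integers $A=p^2+q^2$ and $B=r^2+s^2$ are relatively prime, and let $\varphi$ be a rotation of $\mathbb{R}^2$ about the origin. Then $\varphi(p,q)\in\mathbb{Z}^2$ and $\varphi(r,s)\in\mathbb{Z}^2$ if and only if $\varphi$ is a rotation by an integer multiple of $\pi/2$. *)

(* Defs.v *)
From Stdlib Require Export Reals ZArith.
Open Scope R_scope.

(* The rotation of R^2 about the origin by angle theta (every rotation of
   R^2 about the origin is of this form). *)
Definition rot (theta : R) (v : R * R) : R * R :=
  (fst v * cos theta - snd v * sin theta, fst v * sin theta + snd v * cos theta).

Definition in_Z2 (v : R * R) : Prop :=
  exists a b : Z, v = (IZR a, IZR b).

(* Main.v *)
Require Import Defs.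
From Stdlib Require Import Reals ZArith Lra Lia Psatz.
Open Scope R_scope.

Lemma int_cs (x : R) : (exists c : Z, cos x = IZR c) /\ (exists d : Z, sin x = IZR d) ->
  (exists c : Z, cos (x + PI/2) = IZR c) /\ (exists d : Z, sin (x + PI/2) = IZR d).
Proof.
  intros [[c Hc] [d Hd]]. rewrite cos_plus, sin_plus, cos_PI2, sin_PI2.
  split; [exists (-d)%Z | exists c]; rewrite ?opp_IZR; lra.
Qed.

Lemma int_cs' (x : R) : (exists c : Z, cos x = IZR c) /\ (exists d : Z, sin x = IZR d) ->
  (exists c : Z, cos (x - PI/2) = IZR c) /\ (exists d : Z, sin (x - PI/2) = IZR d).
Proof.
  intros [[c Hc] [d Hd]]. rewrite cos_minus, sin_minus, cos_PI2, sin_PI2.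
  split; [exists d | exists (-c)%Z]; rewrite ?opp_IZR; lra.
Qed.

Lemma int_k (k : Z) : (exists c : Z, cos (IZR k * (PI/2)) = IZR c) /\
  (exists d : Z, sin (IZR k * (PI/2)) = IZR d).
Proof.
  induction k using Z.peano_ind.
  - rewrite Rmult_0_l, cos_0, sin_0. split; [exists 1%Z|exists 0%Z]; reflexivity.
  - rewrite <- Z.add_1_r, plus_IZR. replace ((IZR k + 1) * (PI/2)) with (IZR k * (PI/2) + PI/2) by ring.
    now apply int_cs.
  - rewrite <- Z.sub_1_r, minus_IZR. replace ((IZR k - 1) * (PI/2)) with (IZR k * (PI/2) - PI/2) by ring.
    now apply int_cs'.
Qed.

Theorem mainTheorem11 (p q r s : Z) (theta : R) :
  Z.gcd (p ^ 2 + q ^ 2)%Z (r ^ 2 + s ^ 2)%Z = 1%Z ->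
  ((in_Z2 (rot theta (IZR p, IZR q)) /\ in_Z2 (rot theta (IZR r, IZR s)))
   <-> exists k : Z, theta = IZR k * (PI / 2)).
Proof.
  intros Hg. split.
  - intros [[a [b Hab]] [a' [b' Hab']]].
    unfold rot in Hab, Hab'; simpl in Hab, Hab'.
    injection Hab as H1 H2. injection Hab' as H3 H4.
    destruct (Z.gcd_bezout _ _ _ Hg) as [u [v Huv]].
    assert (Huv' : IZR u * (IZR p * IZR p + IZR q * IZR q) + IZR v * (IZR r * IZR r + IZR s * IZR s) = 1).
    { apply (f_equal IZR) in Huv. rewrite !Z.pow_2_r in Huv. rewrite plus_IZR, !mult_IZR, !plus_IZR, !mult_IZR in Huv.
      exact Huv. }
    assert (Hc : cos theta = IZR (u * (a*p + b*q) + v * (a'*r + b'*s))).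
    { rewrite plus_IZR, !mult_IZR, !plus_IZR, !mult_IZR.
      rewrite <- H1, <- H2, <- H3, <- H4.
      transitivity (cos theta * (IZR u * (IZR p * IZR p + IZR q * IZR q) + IZR v * (IZR r * IZR r + IZR s * IZR s))).
      rewrite Huv'; ring. ring. }
    assert (Hs : sin theta = IZR (u * (b*p - a*q) + v * (b'*r - a'*s))).
    { rewrite plus_IZR, !mult_IZR, !minus_IZR, !mult_IZR.
      rewrite <- H1, <- H2, <- H3, <- H4.
      transitivity (sin theta * (IZR u * (IZR p * IZR p + IZR q * IZR q) + IZR v * (IZR r * IZR r + IZR s * IZR s))).
      rewrite Huv'; ring. ring. }
    set (m := (u * (a*p + b*q) + v * (a'*r + b'*s))%Z) in Hc.
    set (n := (u * (b*p - a*q) + v * (b'*r - a'*s))%Z) in Hs.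
    assert (Hmn : (m*m + n*n = 1)%Z).
    { apply eq_IZR. rewrite plus_IZR, !mult_IZR, <- Hc, <- Hs.
      pose proof (sin2_cos2 theta). unfold Rsqr in *. lra. }
    assert (H : (m = 0 \/ n = 0)%Z) by nia.
    destruct H as [H|H].
    + rewrite H in Hc. destruct (cos_eq_0_0 theta Hc) as [k Hk].
      exists (2*k+1)%Z. rewrite Hk, plus_IZR, mult_IZR. simpl. field.
    + rewrite H in Hs. destruct (sin_eq_0_0 theta Hs) as [k Hk].
      exists (2*k)%Z. rewrite Hk, mult_IZR. simpl. field.
  - intros [k Hk]. subst theta. destruct (int_k k) as [[c Hc] [d Hd]].
    unfold in_Z2, rot; simpl. rewrite Hc, Hd. split.
    + exists (p*c - q*d)%Z, (p*d + q*c)%Z. now rewrite minus_IZR, plus_IZR, !mult_IZR.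
    + exists (r*c - s*d)%Z, (r*d + s*c)%Z. now rewrite minus_IZR, plus_IZR, !mult_IZR.
Qed.
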